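(* Let $G$ be a finite solvable group and let $N$ be a minimal normal subgroup of $G$ contained in the Frattini subgroup $\Phi(G)$. Let $p$ be the prime dividing $|N|$ and let $K$ be a normal subgroup of $G$ containing $N$. Suppose that $K$ centralizes every chief $p$-factor of $G$ lying between $N$ and $K$, i.e. for all normal subgroups $L<H$ of $G$ with $N\le L<H\le K$ such that $H/L$ is a minimal normal subgroup of $G/L$ of $p$-power order, one has $[K,H]\le L$. Then $K$ centralizes $N$.
   Context: $\Phi(G)$ is the Frattini subgroup of $G$, the intersection of all maximal subgroups of $G$. *)

(* Defs.v *)
From mathcomp Require Import all_boot all_fingroup all_solvable.

(* Main.v *)
Require Import Defs.
From mathcomp Require Import all_boot all_fingroup all_solvable.

Local Open Scope group_scope.

Lemma mulHall (gT : finGroupType) (pi : nat_pred) (K H P : {group gT}) :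
  H <| K -> pi.-Hall(K) P -> pi.-nat #|K : H| -> H * P = K.
Proof.
move=> /andP[sHK nHK] hallP piKH.
have sPK := pHall_sub hallP.
have nHP : P \subset 'N(H) := subset_trans sPK nHK.
apply/eqP; rewrite eqEsubset mul_subG //= -quotientSK //.
have hallPH := quotient_pHall nHP hallP.
by rewrite (pHall_id hallPH) // /pgroup card_quotient.
Qed.
Arguments mulHall {gT pi K H P}.

Lemma stab2 (gT : finGroupType) (A X Y : {group gT}) :
  A \subset 'N(X) -> A \subset 'N(Y) -> X \subset 'N(Y) -> Y \subset 'C(A) ->
  [~: X, A] \subset Y -> coprime #|Y| #|A| -> solvable Y -> X \subset 'C(A).
Proof.
move=> nXA nYA nYX cYA sXAY coYA solY.
have := coprime_norm_quotient_cent nXA nYA coYA solY.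
have ->: 'C_(X / Y)(A / Y) = X / Y.
  by apply/setIidPl; rewrite quotient_cents2.
move=> eq; have : X / Y \subset 'C_X(A) / Y by rewrite eq.
rewrite quotientSK // => sX; apply: subset_trans sX _.
by rewrite mul_subG ?subsetIr.
Qed.
Arguments stab2 {gT A X Y}.

Lemma PN (gT : finGroupType) (G N K0 : {group gT}) (p : nat) :
  solvable G -> N <| G -> K0 <| G -> N \subset K0 ->
  (forall L H : {group gT},
      L <| G -> H <| G -> N \subset L -> L \proper H -> H \subset K0 ->
      minnormal (H / L) (G / L) -> p.-group (H / L) ->
      [~: K0, H] \subset L) ->
  forall K : {group gT}, K <| G -> N \subset K -> K \subset K0 ->
  exists T : {group gT}, [/\ T <| G, N \subset T & T \subset K] /\ [/\ p^'.-nat #|T : N|,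
     p.-nat #|K : T| & forall A : {group gT}, A \subset K0 -> p^'.-group A ->
        [~: K, A] \subset T].
Proof.
move=> solG nsNG nsK0G sNK0 hyp K.
elim: {K}_.+1 {-2}K (ltnSn #|K|) => // n IH K leKn nsKG sNK sKK0.
have sK0G := normal_sub nsK0G.
have [sKG nKG] := andP nsKG.
have [sNG nNG] := andP nsNG.
case: (eqVneq K N) => [-> | neKN].
  exists N; split; split; rewrite ?indexgg ?pnat1 //.
  move=> A sAK0 _; rewrite commg_subl.
  exact: subset_trans sAK0 (subset_trans sK0G nNG).
have ltNK : N \proper K by rewrite properEneq eq_sym neKN.
have [L maxL] := @ex_maxgroup _ [pred L : {group gT} | [&& L \proper K, G \subset 'N(L) & N \subset L]] (ex_intro _ N (introT and3P (And3 ltNK nNG (subxx N)))).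
case/maxgroupP: maxL => /and3P[ltLK nLG sNL] maxL.
have sLK := proper_sub ltLK.
have nsLG : L <| G by rewrite /normal nLG (subset_trans sLK sKG).
have [T [[nsTG sNT sTL] [p'TN pLT invL]]] := IH L (leq_trans (proper_card ltLK) leKn) nsLG sNL (subset_trans sLK sKK0).
have [sTG nTG] := andP nsTG.
have chiefL : chief_factor G L K.
  rewrite /chief_factor nsKG andbT; apply/maxgroupP; split; first by rewrite /= ltLK.
  move=> L' /andP[ltL'K nL'G] sLL'; apply: maxL => //=.
  by rewrite ltL'K nL'G (subset_trans sNL sLL').
have minKL := chief_factor_minnormal chiefL.
have [_ ntKL /is_abelemP[q q_pr /abelem_pgroup qKL]] :=
  minnormal_solvable minKL (quotientS L sKG) (quotient_sol L solG).
have nLK : K \subset 'N(L) := subset_trans sKG nLG.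
have qKL' : q.-nat #|K : L| by rewrite -card_quotient.
case: (eqVneq q p) => [eqqp | neqp].
  subst q.
  exists T; split; split => //; first exact: subset_trans sTL sLK.
    by rewrite -(Lagrange_index sLK sTL) pnatM qKL'.
  move=> A sAK0 p'A.
  have sAG := subset_trans sAK0 sK0G.
  have sKAL : [~: K, A] \subset L.
    apply: subset_trans (commgS K sAK0) _; rewrite commGC.
    exact: hyp nsLG nsKG sNL ltLK sKK0 minKL qKL.
  have sLAT := invL A sAK0 p'A.
  have nTA := subset_trans sAG nTG.
  have nTK := subset_trans sKG nTG.
  have sLG := subset_trans sLK sKG.
  have nTL := subset_trans sLG nTG.
  rewrite -quotient_cents2 //.
  apply: (@stab2 _ _ _ (L / T)%G).
  - by rewrite quotient_norms // (subset_trans sAG nKG).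
  - by rewrite quotient_norms // (subset_trans sAG nLG).
  - by rewrite quotient_norms.
  - by rewrite quotient_cents2.
  - by rewrite -quotientR // quotientS.
  - apply: (@pnat_coprime p); first by rewrite card_quotient.
    exact: quotient_pgroup.
  - exact: quotient_sol (solvableS sLG solG).
have p'KL : p^'.-nat #|K : L|.
  by apply: sub_in_pnat qKL' => r _; rewrite !inE /= => /eqP ->.
have solK := solvableS sKG solG.
have [H hallH] := Hall_exists p^' solK.
have [sHK p'H _] := and3P hallH.
have nsLK : L <| K by rewrite /normal sLK nLK.
have defK : L * H = K := mulHall nsLK hallH p'KL.
have sHK0 := subset_trans sHK sKK0.
have sHG := subset_trans sHK sKG.
have sLHT := invL H sHK0 p'H.
have nTH : H \subset 'N(T) := subset_trans sHG nTG.
have sLG := subset_trans sLK sKG.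
have nTL := subset_trans sLG nTG.
have defTH : T <*> H = T * H := norm_joinEr nTH.
have nTH_L : L \subset 'N(T <*> H).
  apply/normsP => l Ll; apply/eqP; rewrite eqEcard cardJg leqnn andbT.
  rewrite defTH conjsMg (normP (subsetP nTL l Ll)).
  rewrite -{2}(mulGid T) -mulgA mulgS //.
  apply/subsetP => _ /imsetP[h Hh ->]; rewrite conjg_mulR -(normC nTH).
  rewrite mem_mulg //; apply: (subsetP sLHT); rewrite commGC.
  exact: mem_commg.
have nTH_G : G \subset 'N(T <*> H).
  rewrite -(Hall_Frattini_arg solK nsKG hallH) mul_subG //.
    by rewrite -defK mul_subG // normsY // normG.
  by rewrite normsY // ?subsetIr // (subset_trans (subsetIl _ _) nTG).
exists (T <*> H)%G; split; split.
- by rewrite /normal join_subG sTG sHG nTH_G.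
- exact: subset_trans sNT (joing_subl _ _).
- by rewrite join_subG sHK (subset_trans sTL sLK).
- rewrite -(Lagrange_index (joing_subl T H) sNT) pnatM p'TN andbT.
  have nTTH : T <*> H \subset 'N(T) by rewrite join_subG normG nTH.
  have ->: #|T <*> H : T| = #|H / T| by rewrite -card_quotient // -(quotientYidl nTH).
  exact: (quotient_pgroup T p'H).
- apply: pnat_dvd (indexgS K (joing_subr T H)) _; rewrite -pnatNK.
  by case/and3P: hallH.
move=> A sAK0 p'A.
have sAG := subset_trans sAK0 sK0G.
have nTHA := subset_trans sAG nTH_G.
have nTHK := subset_trans sKG nTH_G.
rewrite -quotient_cents2 // -defK quotientMl // mul_subG //.
  rewrite quotient_cents2 //; exact: subset_trans (invL A sAK0 p'A) (joing_subl _ _).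
rewrite quotient_cents2 ?(subset_trans sHG nTH_G) //.
apply: subset_trans (commSg A (joing_subr T H)) _; by rewrite commg_subl.
Qed.
Arguments PN {gT G N K0 p}.

Theorem lemma5p2 (gT : finGroupType) (G N K : {group gT}) (p : nat) :
  solvable G ->
  N <| G -> minnormal N G ->
  N \subset 'Phi(G) ->
  prime p -> p %| #|N| ->
  K <| G -> N \subset K ->
  (forall L H : {group gT},
      L <| G -> H <| G -> N \subset L -> L \proper H -> H \subset K ->
      minnormal (H / L) (G / L) -> p.-group (H / L) ->
      [~: K, H] \subset L) ->
  K \subset 'C(N).
Proof.
move=> solG nsNG minN sNPhi p_pr pN nsKG sNK hyp.
have [sNG nNG] := andP nsNG; have [sKG nKG] := andP nsKG.
have [_ ntN /is_abelemP[r r_pr abN]] := minnormal_solvable minN sNG solG.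
have rN := abelem_pgroup abN; have cNN := abelem_abelian abN.
have pNg : p.-group N.
  move/pgroupP: (rN) => /(_ p p_pr pN); rewrite inE /= => /eqP eqpr.
  by rewrite eqpr.
have [T [[nsTG sNT sTK] [p'TN pKT _]]] :=
  PN solG nsNG nsKG sNK hyp K nsKG sNK (subxx K).
have [sTG nTG] := andP nsTG.
have solT := solvableS sTG solG.
have [S hallS] := Hall_exists p^' solT.
have [sST p'S _] := and3P hallS.
have sSG := subset_trans sST sTG.
have nsNT : N <| T by rewrite /normal sNT (subset_trans sTG nNG).
have defT : N * S = T := mulHall nsNT hallS p'TN.
have defG := Hall_Frattini_arg solT nsTG hallS.
have nSG : G \subset 'N(S).
  have sNGS : 'N_G(S) \subset G := subsetIl _ _.
  have ES : S * 'N_G(S) = 'N_G(S) by apply: mulSGid; rewrite subsetI sSG normG.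
  have eqG : 'Phi(G) <*> 'N_G(S) = G.
    apply/eqP; rewrite eqEsubset join_subG Phi_sub sNGS /=.
    rewrite -{1}defG -defT -mulgA ES mul_subG ?joing_subr //.
    exact: subset_trans sNPhi (joing_subl _ _).
  have := Phi_nongen eqG; rewrite genGid => eqNG.
  by rewrite -{1}eqNG subsetIr.
have cNS : S \subset 'C(N).
  have TI : N :&: S = 1 := coprime_TIg (pnat_coprime pNg p'S).
  apply/commG1P; apply/trivgP; rewrite -TI subsetI.
  rewrite commg_subr (subset_trans sSG nNG) /=.
  by rewrite commg_subl (subset_trans sNG nSG).
have cNT : T \subset 'C(N) by rewrite -defT mul_subG.
have [P sylP] := Sylow_exists p K.
have nsTK : T <| K by rewrite /normal sTK (subset_trans sKG nTG).
have defK : T * P = K := mulHall nsTK sylP pKT.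
have sPK := pHall_sub sylP; have pP := pHall_pgroup sylP.
have sPG := subset_trans sPK sKG.
have nNP := subset_trans sPG nNG.
have defNP : N <*> P = N * P := norm_joinEr nNP.
have pNP : p.-group (N <*> P) by rewrite defNP pgroupM pNg pP.
have nsN_NP : N <| N <*> P by rewrite /normal joing_subl join_subG normG nNP.
have ntZ := meet_center_nil (pgroup_nil pNP) nsN_NP ntN.
have sZC : N :&: 'Z(N <*> P) \subset 'C_N(K).
  rewrite subsetI subsetIl /= -defK centM subsetI.
  apply/andP; split.
    by apply: subset_trans (subsetIl _ _) _; rewrite centsC.
  apply: subset_trans (subsetIr _ _) _.
  apply: subset_trans (subsetIr _ _) _.
  exact: centS (joing_subr N P).
case/mingroupP: minN => _ minN'.
have ntC : 'C_N(K) != 1.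
  apply: contraNneq ntZ => C1; apply/eqP/trivgP; rewrite -C1; exact: sZC.
have nC : G \subset 'N('C_N(K)) by rewrite normsI // norms_cent.
have eqC : 'C_N(K) = N.
  by apply: (minN' ('C_N(K))%G) => //=; rewrite ?ntC ?nC ?subsetIl.
by rewrite centsC -{1}eqC subsetIr.
Qed.
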